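(* There is an absolute constant $c>0$ such that for every integer $k\ge 1$ and every integer $n\ge 2k$, there exists an $n$-vertex graph $G$ of pathwidth $k$ such that every EPG-representation of $G$ uses at least $c\,kn$ grid-edges (hence lies in a grid of area at least $c\,kn$).
   Context: The $w\times h$-grid consists of all grid-points $(i,j)$ with integer coordinates $1\le i\le w$, $1\le j\le h$, and all grid-edges joining grid-points at distance $1$; its area is $wh$. An EPG-representation of a graph $G$ assigns to each vertex $v$ a path $\mathrm{path}(v)$ in the grid such that $(v,w)$ is an edge of $G$ if and only if $\mathrm{path}(v)$ and $\mathrm{path}(w)$ share a grid-edge. The pathwidth of $G$ is the smallest $k$ such that $G$ is a subgraph of a $(k+1)$-colourable interval graph (an interval graph is the intersection graph of a family of closed intervals of the real line). *)

(* Defs.v *)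
From HB Require Import structures.
From mathcomp Require Import all_boot all_order all_algebra.
Set Implicit Arguments. Unset Strict Implicit. Unset Printing Implicit Defensive.
Import Order.TTheory GRing.Theory Num.Theory.
Local Open Scope ring_scope.

Definition simple_graph (n : nat) (G : rel 'I_n) : Prop :=
  (forall u v, G u v = G v u) /\ (forall v, ~~ G v v).

(* G is a (spanning) subgraph of a (k+1)-colourable interval graph:
   closed intervals [a v, b v] of the rational line, an interval graph H
   where u ~ v (u <> v) iff the intervals intersect, every edge of G is an
   edge of H, and a proper (k+1)-colouring col of H. *)
Definition intervals_meet (n : nat) (a b : 'I_n -> rat) (u v : 'I_n) : bool :=
  (a u <= b v) && (a v <= b u).

Definition subgraph_of_colourable_interval (n : nat) (G : rel 'I_n) (m : nat) : Prop :=
  exists (a b : 'I_n -> rat) (col : 'I_n -> 'I_m),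
    (forall v, a v <= b v) /\
    (forall u v, G u v -> intervals_meet a b u v) /\
    (forall u v, u != v -> intervals_meet a b u v -> col u != col v).

Definition pathwidth (n : nat) (G : rel 'I_n) (k : nat) : Prop :=
  subgraph_of_colourable_interval G k.+1 /\
  (forall j : nat, (j < k)%N -> ~ subgraph_of_colourable_interval G j.+1).

Definition gpoint := (int * int)%type.

Definition gadj (p q : gpoint) : bool :=
  `|p.1 - q.1| + `|p.2 - q.2| == 1.

Definition grid_path (s : seq gpoint) : bool :=
  if s is x :: s' then uniq s && path gadj x s' else false.

(* lexicographic order used to normalise an undirected grid-edge *)
Definition lexle (p q : gpoint) : bool :=
  (p.1 < q.1) || ((p.1 == q.1) && (p.2 <= q.2)).

Definition norm_edge (p q : gpoint) : gpoint * gpoint :=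
  if lexle p q then (p, q) else (q, p).

Definition gedges (s : seq gpoint) : seq (gpoint * gpoint) :=
  [seq norm_edge e.1 e.2 | e <- zip s (behead s)].

Definition share_edge (s t : seq gpoint) : bool :=
  has (fun e => e \in gedges t) (gedges s).

Definition EPG_rep (n : nat) (G : rel 'I_n) (rep : 'I_n -> seq gpoint) : Prop :=
  (forall v, grid_path (rep v)) /\
  (forall u v, u != v -> (G u v <-> share_edge (rep u) (rep v))).

Definition num_grid_edges (n : nat) (rep : 'I_n -> seq gpoint) : nat :=
  size (undup (flatten [seq gedges (rep v) | v <- enum 'I_n])).

(* Main.v *)
Require Import Defs.
From HB Require Import structures.
From mathcomp Require Import all_boot all_order all_algebra.
From mathcomp Require Import zify lra.
Import Order.TTheory GRing.Theory Num.Theory.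
Local Open Scope ring_scope.

Lemma exmin n (i0 : 'I_n) (b : 'I_n -> rat) : exists w, forall v, b w <= b v.
Proof.
case: (@arg_minP _ _ _ i0 xpredT b erefl) => w _ h; exists w => v; exact: h.
Qed.

Definition Gk n k : rel 'I_n := fun u v => (u < k)%N != (v < k)%N.

Lemma simple_Gk n k : simple_graph (Gk n k).
Proof.
split=> [u v|v]; rewrite /Gk; first by rewrite eq_sym.
by rewrite eqxx.
Qed.

Lemma pw_upper n k : subgraph_of_colourable_interval (Gk n k) k.+1.
Proof.
exists (fun v : 'I_n => if (v < k)%N then 0 else (v:nat)%:R : rat),
  (fun v : 'I_n => if (v < k)%N then (n%:R : rat) else (v:nat)%:R),
  (fun v : 'I_n => inord (if (v < k)%N then (v:nat) else k) : 'I_k.+1).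
have vn : forall v : 'I_n, (v <= n)%N by move=> v; apply: ltnW.
split; [|split].
- by move=> v; case: ifP.
- move=> u v; rewrite /Gk /intervals_meet.
  case: (ltnP u k) => hu; case: (ltnP v k) => hv //= _;
  by rewrite ?ler_nat ?ler0n ?vn.
- move=> u v huv; rewrite /intervals_meet.
  case: (ltnP u k) => hu; case: (ltnP v k) => hv /= hm;
  apply/negP => /eqP /(congr1 (@nat_of_ord _)); rewrite !inordK; try lia.
  + by move=> e; move: huv; rewrite -(inj_eq val_inj) /= e eqxx.
  + move: hm; rewrite !ler_nat => /andP [h1 h2] e.
    by move: huv; rewrite -(inj_eq val_inj) /= eqn_leq h1 h2.
Qed.

Lemma pw_lower n k j : (2 * k <= n)%N -> (j < k)%N ->
  ~ subgraph_of_colourable_interval (Gk n k) j.+1.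
Proof.
move=> hn hj [a [b [col [hab [hG hcol]]]]].
have n0 : (0 < n)%N by lia.
have [w wmin] := exmin _ (Ordinal n0) b.
pose t (i : 'I_k.+1) : nat :=
  if (i < k)%N then (if (w < k)%N then k + i else i)%N else w.
have tn : forall i, (t i < n)%N.
  move=> i; have := ltn_ord w; rewrite /t; case: ifP => ?; try case: ifP => ?; lia.
pose g (i : 'I_k.+1) : 'I_n := insubd w (t i).
have vg : forall i, val (g i) = t i by move=> i; rewrite val_insubd tn.
have ginj : injective g.
  move=> i i' /(congr1 val); rewrite !vg /t => e; apply/val_inj.
  have := ltn_ord i; have := ltn_ord i'.
  have := ltn_ord w; have := ltn_ord i; have := ltn_ord i'.
  move: e; case: (ltnP i k) => ?; case: (ltnP i' k) => ?; case: (ltnP w k) => ? /=; lia.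
have pt : forall i, a (g i) <= b w /\ b w <= b (g i).
  move=> i; case: (g i =P w) => [->|ne]; first by split.
  have : Gk n k w (g i).
    move: ne; rewrite /Gk vg /t; have := ltn_ord i.
    case: (ltnP i k) => hi; case: (ltnP w k) => hw //= _.
    - by move=> _; rewrite ltnNge leq_addr.
    - by move=> _; rewrite hi.
    - by move=> ne; exfalso; apply: ne; apply/val_inj; rewrite vg /t ltnNge hi.
    - by move=> ne; exfalso; apply: ne; apply/val_inj; rewrite vg /t ltnNge hi.
  move/hG; rewrite /intervals_meet => /andP [_ h]; split => //.
have cinj : injective (fun i => col (g i)).
  move=> i i' e; apply: ginj; apply/eqP; apply/negPn/negP => ne.
  suff hm : intervals_meet a b (g i) (g i') by move: (hcol _ _ ne hm); rewrite e eqxx.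
  rewrite /intervals_meet; case: (pt i) => h1 h2; case: (pt i') => h3 h4.
  by rewrite (le_trans h1 h4) (le_trans h3 h2).
have := leq_card _ cinj; rewrite !card_ord; lia.
Qed.

Lemma epg_lower n k (rep : 'I_n -> seq gpoint) : (k <= n)%N ->
  EPG_rep (Gk n k) rep -> (k * (n - k) <= num_grid_edges rep)%N.
Proof.
move=> hkn [_ hrep].
pose lu (u : 'I_k) : 'I_n := widen_ord hkn u.
have bvP : forall v : 'I_(n - k), (k + v < n)%N.
  by move=> v; have := ltn_ord v; lia.
pose bv (v : 'I_(n - k)) : 'I_n := Ordinal (bvP v).
have Guv : forall u v, share_edge (rep (lu u)) (rep (bv v)).
  move=> u v; apply/hrep; last by rewrite /Gk /= ltn_ord /=; lia.
  by rewrite -(inj_eq val_inj) /=; apply/eqP; have := ltn_ord u; lia.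
pose x0 : gpoint * gpoint := ((0, 0), (0, 0)).
pose f (p : 'I_k * 'I_(n - k)) :=
  let s := gedges (rep (lu p.1)) in
  nth x0 s (find (fun e => e \in gedges (rep (bv p.2))) s).
have fin : forall p, f p \in gedges (rep (lu p.1)) /\ f p \in gedges (rep (bv p.2)).
  move=> [u v]; have h := Guv u v; split.
    by apply: mem_nth; rewrite -has_find.
  exact: (nth_find x0 h).
have nosh : forall x y : 'I_n, x != y -> ~~ Gk n k x y ->
   forall e, e \in gedges (rep x) -> e \in gedges (rep y) -> False.
  move=> x y ne nG e ex ey.
  have : share_edge (rep x) (rep y) by apply/hasP; exists e.
  by move/(hrep _ _ ne); apply/negP.
have finj : injective f.
  move=> [u v] [u' v'] e.
  have [h1 h2] := fin (u, v); have [h3 h4] := fin (u', v').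
  rewrite /= e in h1 h2.
  have ev : bv v = bv v'.
    apply/eqP; apply/negPn/negP => ne; apply: (nosh _ _ ne _ _ h2 h4).
    by rewrite /Gk /= negbK; apply/eqP; lia.
  have eu : lu u = lu u'.
    apply/eqP; apply/negPn/negP => ne; apply: (nosh _ _ ne _ _ h1 h3).
    by rewrite /Gk /= negbK ltn_ord ltn_ord.
  congr pair; apply/val_inj.
    by move/(congr1 val): eu.
  by move/(congr1 val): ev => /= /eqP; rewrite eqn_add2l => /eqP.
have := @uniq_leq_size _ (map f (enum {: 'I_k * 'I_(n - k)}))
  (undup (flatten [seq gedges (rep v) | v <- enum 'I_n])).
rewrite size_map -cardE card_prod !card_ord; apply.
  by rewrite map_inj_uniq ?enum_uniq.
move=> e /mapP [p _ ->]; rewrite mem_undup; apply/flatten_mapP.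
by exists (bv p.2); [rewrite mem_enum | case: (fin p)].
Qed.

Theorem corollary5 :
  exists c : rat, 0 < c /\
    forall k n : nat, (1 <= k)%N -> (2 * k <= n)%N ->
      exists G : rel 'I_n,
        simple_graph G /\ pathwidth G k /\
        forall rep : 'I_n -> seq gpoint, EPG_rep G rep ->
          c * k%:R * n%:R <= (num_grid_edges rep)%:R.
Proof.
exists (2^-1); split; first by [].
move=> k n hk hn; exists (Gk n k); split; first exact: simple_Gk.
split; first by split; [exact: pw_upper | move=> j hj; exact: pw_lower].
move=> rep hrep.
have hkn : (k <= n)%N by lia.
have h := epg_lower _ _ _ hkn hrep.
have h2 : (k * n <= 2 * num_grid_edges rep)%N by nia.
have h3 : (k%:R * n%:R : rat) <= 2 * (num_grid_edges rep)%:R.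
  by rewrite -natrM -(natrM _ 2) ler_nat.
move: h3; set x := (k%:R * n%:R : rat); set y := ((num_grid_edges rep)%:R : rat).
rewrite -mulrA -/x; lra.
Qed.
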